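(* Assume the seeds are i.i.d. uniform on $[n]$. If $n\ge6$ is even and $l$ is an integer with $2\le l\le n/2-1$, then $$c:=\limsup_{m\to\infty}\frac{\log\bigl(1-p_1(n,m,l)\bigr)}{m}<0$$ (with the convention $\log 0=-\infty$).
   Context: Candidates $[n]$, $m$ voters; voter $j$ has the clockwise oriented preference list $(s_j,s_j+1,\dots,n,1,\dots,s_j-1)$ with seed $s_j$; seeds are independent and uniform on $[n]$. In an election among a non-empty $S\subseteq[n]$ each voter votes for the first candidate of $S$ in its list; $\Xi_S(i)$ is the number of votes for $i$. Two-round election with partition $(A,B)$ of $[n]$: the winner of $A$ is the $a\in A$ with $\Xi_A(a)>\Xi_A(a')$ for all other $a'\in A$ (if none exists, nobody wins the election); likewise for $B$; between the two first-round winners $a,b$, $a$ wins iff $\Xi_{\{a,b\}}(a)>\Xi_{\{a,b\}}(b)$ (ties: nobody wins). For even $n$ and $2\le l<n/2$, $A^{(1,n,l)}=\{1,\dots,l\}\cup\{l+2i:1\le i\le(n-2l)/2\}$, $B^{(1,n,l)}=[n]\setminus A^{(1,n,l)}$, and $p_1(n,m,l)$ is the probability that candidate $1$ wins the two-round election with partition $(A^{(1,n,l)},B^{(1,n,l)})$. *)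

(* Defs.v *)
From HB Require Import structures.
From mathcomp Require Import all_boot all_order all_algebra.
From mathcomp Require Import all_classical all_reals all_analysis.
Set Implicit Arguments. Unset Strict Implicit. Unset Printing Implicit Defensive.
Import Order.TTheory GRing.Theory Num.Theory.

(* Candidates [n] = {1,...,n} are represented by 'I_n : the ordinal c stands
   for candidate c+1.  A seed s : 'I_n stands for seed s+1.  A profile of
   seeds for m voters is an element of {ffun 'I_m -> 'I_n}. *)

Section Election.
Variables (n m : nat).

(* position (0-based) of candidate c in the clockwise list of seed s:
   (s, s+1, ..., n, 1, ..., s-1) *)
Definition pos (s c : 'I_n) : nat := (c + n - s) %% n.

Definition votes_for (S : {set 'I_n}) (s c : 'I_n) : bool :=
  (c \in S) && [forall c' in S, pos s c <= pos s c'].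

Definition Xi (seeds : {ffun 'I_m -> 'I_n}) (S : {set 'I_n}) (i : 'I_n) : nat :=
  #|[set j : 'I_m | votes_for S (seeds j) i]|.

Definition is_winner (seeds : {ffun 'I_m -> 'I_n}) (S : {set 'I_n}) (a : 'I_n) : bool :=
  (a \in S) && [forall a' in S, (a' != a) ==> (Xi seeds S a' < Xi seeds S a)].

Definition wins_two_round (seeds : {ffun 'I_m -> 'I_n}) (A B : {set 'I_n}) (x : 'I_n) : bool :=
  [exists a, exists b,
     [&& is_winner seeds A a, is_winner seeds B b &
      ((x == a) && (Xi seeds [set a; b] b < Xi seeds [set a; b] a))
      || ((x == b) && (Xi seeds [set a; b] a < Xi seeds [set a; b] b))]].
End Election.

(* A^{(1,n,l)} = {1..l} ∪ {l+2i : 1 <= i <= (n-2l)/2} ; candidate c ~ c+1 *)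
Definition Aset (n l : nat) : {set 'I_n} :=
  [set c : 'I_n | (c.+1 <= l) ||
     [exists i : 'I_n.+1, [&& 1 <= i, i <= (n - 2 * l)./2 & c.+1 == l + 2 * i]]].
Definition Bset (n l : nat) : {set 'I_n} := ~: Aset n l.

(* p_1(n,m,l): seeds i.i.d. uniform on [n], i.e. the uniform distribution on
   the n^m seed profiles; candidate 1 is the ordinal 0. *)
Definition p1 (R : realType) (n m l : nat) : R :=
  match n as n0 return (nat -> R) with
  | 0 => fun _ => 0%R
  | n'.+1 => fun l =>
      (#|[set seeds : {ffun 'I_m -> 'I_n'.+1} |
          wins_two_round seeds (Aset n'.+1 l) (Bset n'.+1 l) ord0]|%:R
       / (n'.+1 ^ m)%N%:R)%R
  end l.

Definition elog (R : realType) (x : R) : \bar R :=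
  if x == 0%R then -oo%E else (ln x)%:E.

(* Main.v *)
Require Import Defs.
From HB Require Import structures.
From mathcomp Require Import all_boot all_order all_algebra.
From mathcomp Require Import all_classical all_reals all_analysis.
From mathcomp Require Import zify ring lra.
Import Order.TTheory GRing.Theory Num.Theory.

Module Part_b.
Ltac splitif := repeat match goal with
  | H : context [if _ <= _ then _ else _] |- _ => move: H
  end; repeat match goal with
  | |- context [if ?a <= ?b then _ else _] => case: (leqP a b)
  end; intros.

Section Comb.
Variable n' : nat.
Local Notation n := n'.+1.

Lemma modE (a b : nat) : a < n -> b < n ->
  (a + n - b) %% n = if b <= a then a - b else a + n - b.
Proof.
move=> ha hb; case: leqP => h.
  have -> : a + n - b = (a - b) + n by lia.
  by rewrite modnDr modn_small //; lia.
by rewrite modn_small //; lia.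
Qed.

Lemma posE (s c : 'I_n) : pos s c = if s <= c then c - s else c + n - s.
Proof. by rewrite /pos modE. Qed.

Lemma pos_add {s d c : 'I_n} : pos s d <= pos s c -> pos d c = pos s c - pos s d.
Proof.
have := ltn_ord s; have := ltn_ord d; have := ltn_ord c.
rewrite !posE; splitif; lia.
Qed.

Lemma pos_inj {s c c' : 'I_n} : pos s c = pos s c' -> c = c'.
Proof.
have := ltn_ord s; have := ltn_ord c'; have := ltn_ord c.
rewrite !posE => ? ? ? h; apply: val_inj => /=; move: h; splitif; lia.
Qed.

Lemma pos_self (c : 'I_n) : pos c c = 0.
Proof. by rewrite posE leqnn subnn. Qed.

Lemma pos_eq0 (d c : 'I_n) : pos d c = 0 -> d = c.
Proof. by move=> h; apply: (@pos_inj d); rewrite h pos_self. Qed.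

Lemma votes_uniq (S : {set 'I_n}) s (c c' : 'I_n) : votes_for S s c -> votes_for S s c' -> c = c'.
Proof.
move=> /andP[cS /forall_inP Hc] /andP[c'S /forall_inP Hc'].
by apply: (@pos_inj s); apply/eqP; rewrite eqn_leq Hc // Hc'.
Qed.

Lemma pos_lt (s c : 'I_n) : pos s c < n.
Proof. by rewrite /pos ltn_pmod. Qed.

Lemma pos_add2 {s d c : 'I_n} : pos s c < pos s d -> pos d c = pos s c + n - pos s d.
Proof.
have := ltn_ord s; have := ltn_ord d; have := ltn_ord c.
rewrite !posE; splitif; lia.
Qed.

Lemma votes_lt (S : {set 'I_n}) s (c d : 'I_n) : votes_for S s c -> d \in S -> d != c ->
  pos s c < pos d c.
Proof.
move=> /andP[cS /forall_inP Hc] dS dc.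
have h1 := Hc d dS.
case: (ltngtP (pos s c) (pos s d)) => h.
- rewrite (pos_add2 h); have := pos_lt s d; lia.
- lia.
- by move: dc; rewrite (pos_inj h) eqxx.
Qed.

Lemma votes_ge (S : {set 'I_n}) (c : 'I_n) k : c \in S ->
  (forall d : 'I_n, d != c -> pos d c < k -> d \notin S) ->
  forall s, pos s c < k -> votes_for S s c.
Proof.
move=> cS H s hs; rewrite /votes_for cS /=; apply/forall_inP => d dS.
rewrite leqNgt; apply/negP => lt.
have dc : d != c by apply/eqP => e; move: lt; rewrite e ltnn.
have e := pos_add (ltnW lt).
by move: (H d dc ltac:(lia)); rewrite dS.
Qed.

Lemma card_pos_lt (c : 'I_n) k : k <= n -> #|[set s : 'I_n | pos s c < k]| = k.
Proof.
move=> kn.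
pose h := fun i : 'I_k => (inord ((c + n - i) %% n) : 'I_n).
have hv (i : 'I_k) : (h i : nat) = (if i <= c then c - i else c + n - i).
  rewrite inordK ?ltn_pmod // modE //; have := ltn_ord i; lia.
have hp (i : 'I_k) : pos (h i) c = i.
  have := ltn_ord i; have := ltn_ord c; have := ltn_ord (h i).
  rewrite posE hv; splitif; lia.
have hinj : injective h by move=> i j e; apply: val_inj; rewrite /= -(hp i) e hp.
suff -> : [set s : 'I_n | pos s c < k] = h @: [set: 'I_k] by rewrite card_imset // cardsT card_ord.
apply/setP => s; rewrite inE; apply/idP/imsetP.
  move=> lt; exists (Ordinal lt) => //; apply: val_inj => /=; rewrite hv /=.
  have := ltn_ord s; have := ltn_ord c; rewrite posE; splitif; lia.
by case=> i _ ->; rewrite hp.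
Qed.

End Comb.

End Part_b.
Import Part_b.

Module Part_d.
Local Open Scope ring_scope.

Lemma card_sum (T : finType) (X : {set T}) : #|X| = (\sum_(t : T) (t \in X))%N.
Proof. by rewrite -sum1_card big_mkcond; apply: eq_bigr => t _; case: (t \in X). Qed.

Lemma card_sumR (R : realType) (T : finType) (X : {set T}) :
  (#|X|%:R : R) = \sum_(t : T) (t \in X)%:R.
Proof.
by rewrite -sumr_const big_mkcond; apply: eq_bigr => t _; case: (t \in X).
Qed.

Lemma sum_set_const (R : realType) (T : finType) (X : {set T}) (c : R) :
  \sum_(t in X) c = #|X|%:R * c.
Proof. by rewrite sumr_const mulr_natl. Qed.

Lemma sum_ord_1 (R : realType) k : \sum_(i < k) (1 : R) = k%:R.
Proof. by rewrite sumr_const card_ord. Qed.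

Section Chern.
Variables (R : realType) (n' m : nat).
Local Notation n := n'.+1.

Lemma chernoff (P Q : {set 'I_n}) (x : R) : 1 <= x -> [disjoint P & Q] ->
  (#|[set f : {ffun 'I_m -> 'I_n} | (#|[set j | f j \in P]| <= #|[set j | f j \in Q]|)%N]|%:R : R)
   <= (n%:R - #|P|%:R * (1 - x^-1) + #|Q|%:R * (x - 1)) ^+ m.
Proof.
move=> x1 dPQ.
have x0 : 0 < x by apply: lt_le_trans x1.
pose w := fun s : 'I_n => (if s \in Q then x else 1) * (if s \in P then x^-1 else 1).
have w0 s : 0 <= w s.
  by rewrite /w; apply: mulr_ge0; case: ifP => _; rewrite ?invr_ge0 ?ler01 ?(ltW x0).
have prodE (f : {ffun 'I_m -> 'I_n}) : \prod_j w (f j) =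
    x ^+ #|[set j | f j \in Q]| * x^-1 ^+ #|[set j | f j \in P]|.
  rewrite /w big_split /=; congr (_ * _); rewrite -big_mkcond /= -prodr_const;
   by apply: eq_bigl => j; rewrite inE.
have step1 (f : {ffun 'I_m -> 'I_n}) :
    (#|[set j | f j \in P]| <= #|[set j | f j \in Q]|)%N -> 1 <= \prod_j w (f j).
  move=> le; rewrite prodE.
  set a := #|[set j | f j \in P]|; set b := #|[set j | f j \in Q]|.
  have -> : b = ((b - a) + a)%N by rewrite subnK.
  by rewrite exprD exprVn -mulrA mulfV ?expf_neq0 ?gt_eqF // mulr1 exprn_ege1.
rewrite card_sumR.
apply: (le_trans (y := \sum_(f : {ffun 'I_m -> 'I_n}) \prod_j w (f j))).
  apply: ler_sum => f _; rewrite inE; case h: (_ <= _)%N => /=.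
    exact: step1.
  by rewrite prodr_ge0.
rewrite -(bigA_distr_bigA (fun (i : 'I_m) (s : 'I_n) => w s)) /= prodr_const card_ord.
have -> : \sum_(s : 'I_n) w s = n%:R - #|P|%:R * (1 - x^-1) + #|Q|%:R * (x - 1).
  have -> : \sum_(s : 'I_n) w s = \sum_(s : 'I_n) (1 - (if s \in P then 1 - x^-1 else 0)
       + (if s \in Q then x - 1 else 0)).
    apply: eq_bigr => s _; rewrite /w.
    case sP: (s \in P); case sQ: (s \in Q).
    - by rewrite (disjointFr dPQ sP) in sQ.
    - by rewrite mul1r addr0 opprB addrC subrK.
    - by rewrite mulr1 subr0 addrC subrK.
    - by rewrite mulr1 subr0 addr0.
  rewrite big_split /= sumrB. Show.
  rewrite -!big_mkcond /= (@sum_set_const _ _ P) (@sum_set_const _ _ Q) sum_ord_1.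
  by [].
by [].
Qed.
End Chern.

End Part_d.
Import Part_d.

Module Part_f.

Section Elec.
Variables (n' h l : nat).
Local Notation n := n'.+1.
Hypothesis hn : n = (2 * h)%N.
Hypothesis hl2 : (2 <= l)%N.
Hypothesis hlh : (l < h)%N.

Local Notation A := (Aset n l).
Local Notation B := (Bset n l).
Local Notation lB := (inord l : 'I_n).

Lemma half2 : ((n - 2 * l)./2 = h - l)%N.
Proof. by rewrite hn -mulnBr mul2n doubleK. Qed.

Lemma inA (c : 'I_n) : c \in A <->
  ((c < l)%N \/ exists i, [/\ (1 <= i)%N, (i <= h - l)%N & c.+1 = (l + 2 * i)%N]).
Proof.
rewrite /Aset inE half2; split.
  case/orP => [H|/existsP[i /and3P[h1 h2 /eqP h3]]]; first by left; lia.
  by right; exists i.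
case => [H|[i [h1 h2 h3]]]; apply/orP; first by left; lia.
right; apply/existsP; exists (inord i); rewrite inordK; last by lia.
by rewrite h1 h2 h3 eqxx.
Qed.

Lemma lBv : (lB : nat) = l.
Proof. by rewrite inordK //; lia. Qed.

Lemma A0 : (ord0 : 'I_n) \in A.
Proof. by apply/inA; left => /=; lia. Qed.

Lemma A_main (d : 'I_n) : d != ord0 -> (pos d ord0 < l.+1)%N -> d \notin A.
Proof.
move=> dn hp; apply/negP => /inA H.
have d0 : (d : nat) <> 0%N by move=> e; move/eqP: dn; apply; apply: val_inj.
move: hp; rewrite posE /=; have := ltn_ord d.
case: H => [?|[i [? ? ?]]]; splitif; lia.
Qed.

Lemma ord_neq (a b : 'I_n) : (a : nat) <> b -> a != b.
Proof. by move=> hab; apply/eqP => e; apply: hab; rewrite e. Qed.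

Lemma A_other (c' : 'I_n) : c' \in A -> c' != ord0 ->
  exists d : 'I_n, [/\ d \in A, d != c' & (pos d c' <= l)%N].
Proof.
move=> /inA H c0.
have c0' : (c' : nat) <> 0%N by move=> e; move/eqP: c0; apply; apply: val_inj.
have cn := ltn_ord c'.
case: H => [H|[i [i1 i2 i3]]].
  exists (inord c'.-1); rewrite ord_neq; last by rewrite inordK; lia.
  split => //; last by rewrite posE inordK; [splitif; lia | lia].
  by apply/inA; left; rewrite inordK; lia.
case: (ltnP 1 i) => hi.
  exists (inord (c' - 2)); rewrite ord_neq; last by rewrite inordK; lia.
  split => //; last by rewrite posE inordK; [splitif; lia | lia].
  apply/inA; right; exists i.-1; rewrite inordK; [split; lia | lia].
exists (inord l.-1); rewrite ord_neq; last by rewrite inordK; lia.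
split => //; last by rewrite posE inordK; [splitif; lia | lia].
by apply/inA; left; rewrite inordK; lia.
Qed.

Lemma lB_notA : lB \notin A.
Proof. by apply/negP => /inA; rewrite lBv; case => [|[i [? ? ?]]]; lia. Qed.

Lemma lB_B : lB \in B.
Proof. by rewrite /Bset inE lB_notA. Qed.

Lemma B_main (d : 'I_n) : d != lB -> (pos d lB < l.+1)%N -> d \notin B.
Proof.
move=> dn hp; rewrite /Bset inE negbK; apply/inA; left.
have d0 : (d : nat) <> l by move=> e; move/eqP: dn; apply; apply: val_inj; rewrite /= e lBv.
move: hp; rewrite posE lBv; have := ltn_ord d; splitif; lia.
Qed.

Lemma notA (c : 'I_n) : c \notin A ->
  (l <= c)%N /\ forall i, (1 <= i)%N -> (i <= h - l)%N -> c.+1 <> (l + 2 * i)%N.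
Proof.
move=> H; split.
  by rewrite leqNgt; apply/negP => hc; move: H; rewrite (iffRL (inA c)) //; left.
move=> i h1 h2 h3; move: H; rewrite (iffRL (inA c)) //; right; exists i; split; assumption.
Qed.

Lemma B_other (c' : 'I_n) : c' \in B -> c' != lB ->
  exists d : 'I_n, [/\ d \in B, d != c' & (pos d c' <= l)%N].
Proof.
rewrite /Bset inE => /notA [hc Hc] cl.
have cl' : (c' : nat) <> l by move=> e; move/eqP: cl; apply; apply: val_inj; rewrite /= e lBv.
have cn := ltn_ord c'.
case: (ltnP (n - l) c') => hc2.
  exists (inord c'.-1); rewrite ord_neq; last by rewrite inordK; lia.
  split => //; last by rewrite posE inordK; [splitif; lia | lia].
  rewrite /Bset inE; apply/negP => /inA; rewrite inordK; last by lia.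
  case => [|[i [? ? ?]]]; lia.
have c2 : (l + 2 <= c')%N.
  have := Hc 1%N; lia.
exists (inord (c' - 2)); rewrite ord_neq; last by rewrite inordK; lia.
split => //; last by rewrite posE inordK; [splitif; lia | lia].
rewrite /Bset inE; apply/negP => /inA; rewrite inordK; last by lia.
case => [|[j [? ? ?]]]; first by lia.
have := Hc j.+1; lia.
Qed.

Local Notation S2 := [set (ord0 : 'I_n); lB].

Lemma S2_0 : (ord0 : 'I_n) \in S2.
Proof. by rewrite !inE eqxx. Qed.

Lemma S2_main (d : 'I_n) : d != ord0 -> (pos d ord0 < n - l)%N -> d \notin S2.
Proof.
move=> dn hp; rewrite !inE negb_or dn /=; apply/eqP => e.
by move: hp; rewrite e posE lBv /=; splitif; lia.
Qed.

Lemma S2_other : [/\ (ord0 : 'I_n) \in S2, (ord0 : 'I_n) != lB & (pos ord0 lB <= l)%N].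
Proof.
split; first exact: S2_0.
  by apply: ord_neq; rewrite lBv /=; lia.
by rewrite posE lBv /=; splitif; lia.
Qed.

End Elec.

End Part_f.
Import Part_f.

Module Part_g.
Local Open Scope ring_scope.

Lemma le_sum1 (R : realType) (I : finType) (F : I -> R) i0 :
  (forall i, 0 <= F i) -> F i0 <= \sum_i F i.
Proof.
move=> F0; rewrite (bigD1 i0) //= lerDl; exact: sumr_ge0.
Qed.

Arguments votes_uniq {n'} [S s c c'].
Arguments votes_lt {n'} [S s c d].
Arguments votes_ge {n'} [S c k].
Arguments pos_lt {n'}.
Arguments card_pos_lt {n'}.

Arguments A0 {n' h l}. Arguments A_main {n' h l}. Arguments A_other {n' h l}.
Arguments lB_B {n' h l}. Arguments B_main {n' h l}. Arguments B_other {n' h l}.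
Arguments S2_0 {n' l}. Arguments S2_main {n' h l}. Arguments S2_other {n' h l}.

Section Main.
Variables (R : realType) (n' h l m : nat).
Local Notation n := n'.+1.
Hypothesis hn : n = (2 * h)%N.
Hypothesis hl2 : (2 <= l)%N.
Hypothesis hlh : (l < h)%N.

Local Notation A := (Aset n l).
Local Notation B := (Bset n l).
Local Notation lB := (inord l : 'I_n).
Local Notation S2 := [set (ord0 : 'I_n); lB].

Definition rr : R := n%:R - 2^-1 + l%:R / (2 * l + 1)%:R.

Lemma rr_ge0 : 0 <= rr.
Proof.
rewrite /rr; have : (1 : R) <= n%:R by rewrite ler1n.
have : 0 <= l%:R / (2 * l + 1)%:R :> R by rewrite divr_ge0.
have : (2^-1 : R) <= 1 by rewrite invf_le1 ?ler1n.
lra.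
Qed.

Lemma event_bound (S : {set 'I_n}) (c c' d : 'I_n) k :
  c \in S -> (forall d, d != c -> (pos d c < k)%N -> d \notin S) -> (l < k)%N -> (k <= n)%N ->
  d \in S -> d != c' -> (pos d c' <= l)%N -> c != c' ->
  (#|[set f : {ffun 'I_m -> 'I_n} | (Xi f S c <= Xi f S c')%N]|%:R : R) <= rr ^+ m.
Proof.
move=> cS Hc lk kn dS dc' pd cc'.
set P := [set s | votes_for S s c]; set Q := [set s | votes_for S s c'].
have -> : [set f : {ffun 'I_m -> 'I_n} | (Xi f S c <= Xi f S c')%N] =
    [set f : {ffun 'I_m -> 'I_n} | (#|[set j | f j \in P]| <= #|[set j | f j \in Q]|)%N].
  apply/setP => f; rewrite !inE /Xi; congr (_ <= _)%N; apply: eq_card => j; by rewrite !inE.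
have dPQ : [disjoint P & Q].
  rewrite -setI_eq0; apply/eqP/setP => s; rewrite !inE; apply/negP => /andP[h1 h2].
  by move: cc'; rewrite (votes_uniq h1 h2) eqxx.
have hP : (l.+1 <= #|P|)%N.
  have sub : [set s | (pos s c < k)%N] \subset P.
    by apply/fintype.subsetP => s; rewrite !inE; exact: votes_ge.
  by apply: leq_trans (subset_leq_card sub); rewrite card_pos_lt.
have hQ : (#|Q| <= l)%N.
  have sub : Q \subset [set s | (pos s c' < pos d c')%N].
    by apply/fintype.subsetP => s; rewrite !inE => v; exact: votes_lt v dS dc'.
  by apply: leq_trans (subset_leq_card sub) _; rewrite card_pos_lt // ltnW // pos_lt.
have Pn : (#|P| <= n)%N by rewrite -[X in (_ <= X)%N]card_ord max_card.
pose a : R := (2 * l + 1)%:R.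
have ha : 0 < a by rewrite /a ltr0n addn1.
pose x := (a + 1) / a.
have x1 : 1 <= x by rewrite /x ler_pdivlMr // mul1r lerDl.
apply: le_trans (@chernoff R n' m P Q x x1 dPQ) _.
have e1 : x - 1 = a^-1 by rewrite /x; field; rewrite gt_eqF.
have e2 : 1 - x^-1 = (a + 1)^-1.
  rewrite /x invf_div; field; rewrite ?gt_eqF //; apply: ltr_wpDl => //.
rewrite e1 e2.
have hp : (l.+1%:R : R) <= #|P|%:R by rewrite ler_nat.
have hq : (#|Q|%:R : R) <= l%:R by rewrite ler_nat.
have hpn : (#|P|%:R : R) <= n%:R by rewrite ler_nat.
have half : (l.+1%:R : R) * (a + 1)^-1 = 2^-1.
  have ea : a + 1 = (2 * l.+1)%:R by rewrite /a natr1; congr (_%:R); lia.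
  by rewrite ea natrM invfM mulrA mulrC mulrA mulVf ?mul1r // pnatr_eq0.
have ia : 0 < a^-1 by rewrite invr_gt0.
have ia1 : 0 < (a + 1)^-1 by rewrite invr_gt0 ltr_wpDl.
have ia1' : (a + 1)^-1 <= 1 by rewrite invf_le1 ?ltr_wpDl // lerDr ltW.
have f1 : (l.+1%:R : R) * (a + 1)^-1 <= #|P|%:R * (a + 1)^-1 by rewrite ler_wpM2r // ltW.
have f2 : (#|Q|%:R : R) * a^-1 <= l%:R * a^-1 by rewrite ler_wpM2r // ltW.
have f3 : (#|P|%:R : R) * (a + 1)^-1 <= #|P|%:R by rewrite ler_piMr // ltW.
have f4 : (0 : R) <= #|Q|%:R * a^-1 by rewrite mulr_ge0 // ltW.
apply: lerXn2r; rewrite ?nnegrE.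
- lra.
- exact: rr_ge0.
- rewrite /rr -/a; lra.
Qed.


Definition EA (c' : 'I_n) := [set f : {ffun 'I_m -> 'I_n} |
  [&& c' \in A, c' != ord0 & (Xi f A ord0 <= Xi f A c')%N]].
Definition EB (c' : 'I_n) := [set f : {ffun 'I_m -> 'I_n} |
  [&& c' \in B, c' != lB & (Xi f B lB <= Xi f B c')%N]].
Definition EF := [set f : {ffun 'I_m -> 'I_n} | (Xi f S2 ord0 <= Xi f S2 lB)%N].
Definition W := [set f : {ffun 'I_m -> 'I_n} | wins_two_round f A B ord0].

Lemma notWin f : f \notin W ->
  (exists c', f \in EA c') \/ (exists c', f \in EB c') \/ f \in EF.
Proof.
rewrite inE => nw.
case: (pickP (fun c' => f \in EA c')) => [c' hc|hA]; first by left; exists c'.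
case: (pickP (fun c' => f \in EB c')) => [c' hc|hB]; first by right; left; exists c'.
right; right; rewrite inE leqNgt; apply/negP => hF.
apply: (negP nw); apply/existsP; exists ord0; apply/existsP; exists lB.
apply/and3P; split.
- rewrite /is_winner (A0 hn hl2 hlh) /=; apply/forall_inP => a aA; apply/implyP => a0.
  by have := hA a; rewrite /= inE aA a0 /= => /negbT; rewrite -ltnNge.
- rewrite /is_winner (lB_B hn hl2 hlh) /=; apply/forall_inP => a aB; apply/implyP => a0.
  by have := hB a; rewrite /= inE aB a0 /= => /negbT; rewrite -ltnNge.
- by rewrite eqxx hF.
Qed.

Lemma EA_bound c' : (#|EA c'|%:R : R) <= rr ^+ m.
Proof.
case: (boolP ((c' \in A) && (c' != ord0))) => [/andP[cA c0]|hc].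
  have [d [dA dc pd]] := A_other hn hl2 hlh _ cA c0.
  apply: le_trans (@event_bound A ord0 c' d l.+1 (A0 hn hl2 hlh) (A_main hn hl2 hlh) _ _ dA dc pd _).
  - rewrite ler_nat; apply: subset_leq_card; apply/fintype.subsetP => f.
    by rewrite !inE => /and3P[_ _ ->].
  - by [].
  - lia.
  - by rewrite eq_sym.
have -> : EA c' = finset.set0.
  apply/setP => f; rewrite finset.in_set0 /EA finset.in_set; move: hc.
  by case: (c' \in A); case: (c' != _).
by rewrite cards0 exprn_ge0 // rr_ge0.
Qed.

Lemma EB_bound c' : (#|EB c'|%:R : R) <= rr ^+ m.
Proof.
case: (boolP ((c' \in B) && (c' != lB))) => [/andP[cB c0]|hc].
  have [d [dB dc pd]] := B_other hn hl2 hlh _ cB c0.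
  apply: le_trans (@event_bound B lB c' d l.+1 (lB_B hn hl2 hlh) (B_main hn hl2 hlh) _ _ dB dc pd _).
  - rewrite ler_nat; apply: subset_leq_card; apply/fintype.subsetP => f.
    by rewrite !inE => /and3P[_ _ ->].
  - by [].
  - lia.
  - by rewrite eq_sym.
have -> : EB c' = finset.set0.
  apply/setP => f; rewrite finset.in_set0 /EB finset.in_set; move: hc.
  by case: (c' \in B); case: (c' != _).
by rewrite cards0 exprn_ge0 // rr_ge0.
Qed.

Lemma EF_bound : (#|EF|%:R : R) <= rr ^+ m.
Proof.
have [d0 d0l pd] := S2_other hn hl2 hlh.
apply: le_trans (@event_bound S2 ord0 lB ord0 (n - l) S2_0 (S2_main hn hl2 hlh) _ _ d0 d0l pd d0l).
- by [].
- lia.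
- lia.
Qed.

Lemma bad_bound : (#|~: W|%:R : R) <= (n + n + 1)%:R * rr ^+ m.
Proof.
rewrite card_sumR.
apply: (le_trans (y := \sum_f (\sum_c' (f \in EA c')%:R + \sum_c' (f \in EB c')%:R + (f \in EF)%:R))).
  apply: ler_sum => f _.
  have g0 (b : bool) : (0 : R) <= b%:R by case: b.
  have s0 (F : 'I_n -> bool) : (0 : R) <= \sum_c' (F c')%:R by apply: sumr_ge0.
  case fW: (f \in ~: W); last first.
    have -> : (false%:R : R) = 0 by exact: mulr0n.
    by rewrite !addr_ge0 ?s0 ?g0.
  move: fW; rewrite inE => /notWin [[c' hc]|[[c' hc]|hc]].
  - have := @le_sum1 R _ (fun c' => (f \in EA c')%:R) c' (fun i => g0 _).
    rewrite /= hc; have := s0 (fun c' => f \in EB c'); have := g0 (f \in EF); have : (true%:R : R) = 1 by exact: mulr1n. lra.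
  - have := @le_sum1 R _ (fun c' => (f \in EB c')%:R) c' (fun i => g0 _).
    rewrite /= hc; have := s0 (fun c' => f \in EA c'); have := g0 (f \in EF); have : (true%:R : R) = 1 by exact: mulr1n. lra.
  - rewrite hc /=; have := s0 (fun c' => f \in EB c'); have := s0 (fun c' => f \in EA c'); have : (true%:R : R) = 1 by exact: mulr1n. lra.
have hA : \sum_(f : {ffun 'I_m -> 'I_n}) \sum_c' (f \in EA c')%:R <= n%:R * rr ^+ m.
  rewrite exchange_big /=.
  apply: (le_trans (y := \sum_(c' : 'I_n) rr ^+ m)).
    by apply: ler_sum => c' _; rewrite -card_sumR; exact: EA_bound.
  by rewrite sumr_const card_ord mulr_natl.
have hB : \sum_(f : {ffun 'I_m -> 'I_n}) \sum_c' (f \in EB c')%:R <= n%:R * rr ^+ m.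
  rewrite exchange_big /=.
  apply: (le_trans (y := \sum_(c' : 'I_n) rr ^+ m)).
    by apply: ler_sum => c' _; rewrite -card_sumR; exact: EB_bound.
  by rewrite sumr_const card_ord mulr_natl.
have hF : \sum_(f : {ffun 'I_m -> 'I_n}) (f \in EF)%:R <= rr ^+ m.
  by rewrite -card_sumR; exact: EF_bound.
rewrite !big_split /= !natrD !mulrDl mul1r.
by apply: lerD => //; apply: lerD.
Qed.
End Main.

End Part_g.
Import Part_g.

Module Part_z.
Local Open Scope ring_scope.

Lemma limsup_le (R : realType) (u : (\bar R)^nat) c N :
  (forall k, (N <= k)%N -> (u k <= c)%E) -> (limn_esup u <= c)%E.
Proof.
move=> H; rewrite limn_esup_lim; apply: lime_le; first exact: is_cvg_esups.
near=> k; apply: ge_ereal_sup => _ [j /= hj <-]; apply: H.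
apply: leq_trans hj; near: k; by exists N.
Unshelve. all: by end_near. Qed.

Lemma key_bound (R : realType) (n' h l m : nat) :
  n'.+1 = (2 * h)%N -> (2 <= l)%N -> (l < h)%N ->
  0 <= 1 - p1 R n'.+1 m l /\
  1 - p1 R n'.+1 m l <= (n'.+1 + n'.+1 + 1)%:R * (rr R n' l / n'.+1%:R) ^+ m.
Proof.
move=> hn hl2 hlh.
have bb := @bad_bound R n' h l m hn hl2 hlh.
rewrite /p1 -/(W n' l m).
set a := #|W n' l m|; set b := #|~: W n' l m|.
have eN : ((n'.+1 ^ m)%N%:R : R) = a%:R + b%:R.
  by rewrite -natrD /a /b cardsC card_ffun !card_ord.
have N0 : 0 < (a%:R + b%:R : R) by rewrite -eN ltr0n expn_gt0.
have e1 : 1 - a%:R / (n'.+1 ^ m)%N%:R = b%:R / (n'.+1 ^ m)%N%:R :> R.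
  by rewrite eN; field; rewrite gt_eqF.
rewrite e1; split; first by rewrite divr_ge0.
rewrite expr_div_n natrX mulrA ler_pdivrMr ?exprn_gt0 ?ltr0n //.
by rewrite mulfVK ?expf_neq0 ?pnatr_eq0.
Qed.

End Part_z.
Import Part_z.

Theorem mainTheorem6 (R : realType) (n l : nat) :
  6 <= n -> ~~ odd n -> 2 <= l -> l <= n./2 - 1 ->
  (limn_esup (fun m : nat =>
     (elog (1 - p1 R n m l) * (m%:R^-1)%:E)%E) < 0)%E.
Proof.
move=> n6 nodd l2 lh.
Local Open Scope ring_scope.
case: n n6 nodd lh => [//|n'] n6 nodd lh.
pose h := n'.+1./2.
have hn : n'.+1 = (2 * h)%N.
  by have := odd_double_half n'.+1; rewrite (negbTE nodd) /h; lia.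
have hlh : (l < h)%N by rewrite /h; lia.
set N : R := n'.+1%:R.
set r := rr R n' l.
have N1 : 1 <= N by rewrite /N ler1n.
have q0 : 0 <= l%:R / (2 * l + 1)%:R :> R by rewrite divr_ge0.
have q1 : l%:R / (2 * l + 1)%:R < 2^-1 :> R.
  have e : ((2 * l + 1)%:R : R) = ((2 * l + 1)%N)%:R by [].
  rewrite ltr_pdivrMr ?ltr0n ?addn1 //.
  have e2 : (((2 * l).+1)%:R : R) = 2 * l%:R + 1 by rewrite -natr1; congr (_ + 1); exact: (natrM R 2 l).
  rewrite e2; lra.
have r0 : 0 < r by rewrite /r /rr -/N; lra.
have rn : r < N by rewrite /r /rr -/N; lra.
set rho := r / N.
have rho0 : 0 < rho by rewrite divr_gt0 // (lt_le_trans ltr01 N1).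
have rho1 : rho < 1 by rewrite ltr_pdivrMr ?mul1r // (lt_le_trans ltr01 N1).
have lr : ln rho < 0 by rewrite ln_lt0 // rho0 rho1.
set K : R := (n'.+1 + n'.+1 + 1)%:R.
have K1 : 1 <= K by rewrite /K ler1n addn1.
have lK : 0 <= ln K by rewrite ln_ge0.
pose M := (Num.truncn (2 * ln K / - ln rho)).+1.
apply: (le_lt_trans (@limsup_le R _ (ln rho / 2)%:E M _)); last first.
  by rewrite lte_fin; lra.
move=> k Mk.
have [g0 gK] := @key_bound R n' h l k hn l2 hlh.
have kpos : 0 < k%:R :> R by rewrite ltr0n (leq_trans _ Mk).
have hk : 2 * ln K < k%:R * (- ln rho).
  rewrite -ltr_pdivrMr ?oppr_gt0 //.
  apply: (lt_le_trans (truncnS_gt _)); rewrite ler_nat; exact: Mk.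
rewrite /elog; case: eqP => [_|ne].
  by rewrite gt0_mulNye ?lte_fin ?invr_gt0 // leNye.
have pos : 0 < 1 - p1 R n'.+1 k l by rewrite lt_neqAle eq_sym g0 andbT; apply/eqP.
rewrite -EFinM lee_fin.
have Kr0 : 0 < K * rho ^+ k by rewrite mulr_gt0 ?exprn_gt0 // (lt_le_trans ltr01 K1).
have hL : ln (1 - p1 R n'.+1 k l) <= ln K + k%:R * ln rho.
  rewrite mulr_natl -lnXn // -lnM ?posrE ?exprn_gt0 ?(lt_le_trans ltr01 K1) //.
  by rewrite ler_ln ?posrE.
rewrite ler_pdivrMr //; lra.
Qed.
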